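(* Let $g\in\mathcal P$ be continuously differentiable on $(a_g,b_g)$, let $\alpha\in[0,1)$ and assume $g'(x)<\alpha$ for all $x\in(a_g,b_g)$. Then $\mathrm{gr}(g)$ is stable under the shaking $\mathrm{Sh}_\alpha$, i.e. $\mathrm{Sh}_\alpha(\mathrm{gr}(g))=\mathrm{gr}(g)$.
   Context: $\mathcal P$ is the set of continuous $g:\mathbb R\to\mathbb R$ with $g(x)\ge|x|$ for all $x$, $g(x)=|x|$ for $|x|$ large, and $g(x_0)\ne|x_0|$ for some $x_0$. For $g\in\mathcal P$: $a_g=\inf\{x:g(x)\ne|x|\}$, $b_g=\sup\{x:g(x)\ne|x|\}$, $\mathrm{gr}(g)=\{(x,y)\in[a_g,b_g]\times\mathbb R_{\ge0}:|x|\le y\le g(x)\}$. Shaking of sets: let $D$ be the line $y=-x$ and $v_\alpha$ the unit vector positively collinear to $(1,\alpha)$. For compact $K\subseteq\mathbb R^2$, $\mathrm{Sh}_\alpha(K)=\bigcup_{p\in D}K^p$, where $K^p=\emptyset$ if $K\cap(p+\mathbb Rv_\alpha)=\emptyset$ and otherwise $K^p$ is the segment from $p$ to $p+|K\cap(p+\mathbb Rv_\alpha)|\,v_\alpha$, with $|\cdot|$ the one-dimensional Lebesgue measure on the line. *)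

(* Defs.v *)
From HB Require Import structures.
From mathcomp Require Import all_boot all_order all_algebra.
From mathcomp Require Import all_classical all_reals all_analysis.
Set Implicit Arguments. Unset Strict Implicit. Unset Printing Implicit Defensive.
Import Order.TTheory GRing.Theory Num.Theory.
Import numFieldNormedType.Exports.
Local Open Scope classical_set_scope.
Local Open Scope ring_scope.

Section Defs.
Variable R : realType.

Definition inP (g : R -> R) : Prop :=
  continuous g /\
  (forall x, `|x| <= g x) /\
  (exists M : R, forall x, M < `|x| -> g x = `|x|) /\
  (exists x0, g x0 != `|x0|).

Definition a_g (g : R -> R) : R := inf [set x | g x != `|x|].
Definition b_g (g : R -> R) : R := sup [set x | g x != `|x|].

Definition gr (g : R -> R) : set (R * R) :=
  [set q | a_g g <= q.1 <= b_g g /\ 0 <= q.2 /\ `|q.1| <= q.2 <= g q.1].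

Definition v_alpha (alpha : R) : R * R :=
  (1 / Num.sqrt (1 + alpha ^+ 2), alpha / Num.sqrt (1 + alpha ^+ 2)).

Definition ptv (p v : R * R) (t : R) : R * R := (p.1 + t * v.1, p.2 + t * v.2).

Definition Dpt (s : R) : R * R := (s, - s).

(* one-dimensional Lebesgue measure of K ∩ (p + R v), v unit, computed
   via the arclength parametrisation t |-> p + t v *)
Definition line_len (K : set (R * R)) (p v : R * R) : R :=
  fine (lebesgue_measure [set t : R | K (ptv p v t)]).

Definition Kp (alpha : R) (K : set (R * R)) (p : R * R) : set (R * R) :=
  [set q | (exists t, K (ptv p (v_alpha alpha) t)) /\
           exists2 t, 0 <= t <= line_len K p (v_alpha alpha) &
             q = ptv p (v_alpha alpha) t].

Definition Sh (alpha : R) (K : set (R * R)) : set (R * R) :=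
  \bigcup_(s in [set: R]) Kp alpha K (Dpt s).

End Defs.

(* Main.v *)
Require Import Defs.
From HB Require Import structures.
From mathcomp Require Import all_boot all_order all_algebra.
From mathcomp Require Import all_classical all_reals all_analysis.
From mathcomp Require Import ring lra.
Import Order.TTheory GRing.Theory Num.Theory.
Import numFieldNormedType.Exports.
Local Open Scope classical_set_scope.
Local Open Scope ring_scope.

Set Implicit Arguments. Unset Strict Implicit.
Section L.
Variable R : realType.

Lemma closed_leF (F G : R -> R) : continuous F -> continuous G ->
  closed [set t | F t <= G t].
Proof.
move=> cF cG.
have -> : [set t | F t <= G t] = (fun t => G t - F t) @^-1` [set x | 0 <= x].
  by apply/seteqP; split => t /=; rewrite subr_ge0.
apply: preimage_closed; last exact: closed_ge.
move=> t _.

exact: (@continuousB _ _ _ G F t (cG t) (cF t)).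
Qed.

Lemma cont_aff (s c : R) : continuous (fun t : R => s + t * c).
Proof.
move=> t.
have h1 : {for t, continuous (fun t : R => t * c)}.
  apply: (@continuousM _ _ (fun t : R => t) (fun=> c) t); [exact: cvg_id| exact: cst_continuous].
have h0 : {for t, continuous (fun=> s)} by exact: cst_continuous.
have := continuousD h0 h1.
exact.
Qed.

Lemma cont_comp (f h : R -> R) : continuous f -> continuous h ->
  continuous (fun t => h (f t)).
Proof. by move=> cf ch t; apply: (continuous_comp (cf t) (ch _)). Qed.

Lemma test (x y z: R) : 0 < z -> x * z <= y * z -> x <= y.
Proof. move=> *; nra. Qed.

Lemma S_lb (g : R -> R) : inP g -> has_lbound [set x | g x != `|x|].
Proof.
case=> _ [_ [[M hM] _]]; exists (- M) => x /= hx.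
have : `|x| <= M.
  rewrite leNgt; apply/negP => /hM hx'; by rewrite hx' eqxx in hx.
by rewrite ler_norml => /andP[].
Qed.

Lemma S_ub (g : R -> R) : inP g -> has_ubound [set x | g x != `|x|].
Proof.
case=> _ [_ [[M hM] _]]; exists M => x /= hx.
have : `|x| <= M.
  rewrite leNgt; apply/negP => /hM hx'; by rewrite hx' eqxx in hx.
by rewrite ler_norml => /andP[].
Qed.

Lemma closedC (g : R -> R) : inP g -> closed [set x | g x <= `|x|].
Proof.
case=> cg _; apply: closed_leF => //; exact: norm_continuous.
Qed.

Lemma ga_eq (g : R -> R) : inP g -> g (a_g g) = `|a_g g|.
Proof.
move=> hg; have lb := S_lb hg.
have hsub : [set x | x < a_g g] `<=` [set x | g x <= `|x|].
  move=> x /= hx; rewrite leNgt; apply/negP => hlt.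
  have : a_g g <= x by apply: (ge_inf lb); rewrite /= gt_eqF.
  by rewrite leNgt hx.
have : closure [set x | x < a_g g] (a_g g) by rewrite closure_lt /=.
move/(closureS hsub); rewrite -(proj1 (closure_id _) (closedC hg)) /= => h.
by apply/le_anti; rewrite h (proj1 (proj2 hg)).
Qed.

Lemma gb_eq (g : R -> R) : inP g -> g (b_g g) = `|b_g g|.
Proof.
move=> hg; have ub := S_ub hg.
have hsub : [set x | b_g g < x] `<=` [set x | g x <= `|x|].
  move=> x /= hx; rewrite leNgt; apply/negP => hlt.
  have : x <= b_g g by apply: (ub_le_sup ub); rewrite /= gt_eqF.
  by rewrite leNgt hx.
have : closure [set x | b_g g < x] (b_g g) by rewrite closure_gt /=.
move/(closureS hsub); rewrite -(proj1 (closure_id _) (closedC hg)) /= => h.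
by apply/le_anti; rewrite h (proj1 (proj2 hg)).
Qed.

Lemma hdec (g : R -> R) (alpha : R) : inP g ->
  (forall x, a_g g < x < b_g g -> derivable g x 1) ->
  (forall x, a_g g < x < b_g g -> derive1 g x < alpha) ->
  forall x z, a_g g <= x -> x <= z -> z <= b_g g ->
  g z - alpha * z <= g x - alpha * x.
Proof.
move=> hg hd hlt x z ax xz zb.
case: (ltgtP x z) xz => // [xz _|-> _]; last by [].
have hin y : y \in `]x, z[ -> a_g g < y < b_g g.
  rewrite in_itv /= => /andP[h1 h2]; apply/andP; split.
    exact: le_lt_trans ax h1.
  exact: lt_le_trans h2 zb.
have [c cin eq] := @MVT R g (derive1 g) x z xz
  (fun y hy => ltac:(rewrite derive1E; exact: derivableP (hd y (hin y hy))))
  (continuous_subspaceT (proj1 hg)).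
have := hlt c (hin c cin).
nra.
Qed.


Lemma ab_lt (g : R -> R) : inP g -> a_g g < b_g g.
Proof.
move=> hg; have [x0 hx0] := proj2 (proj2 (proj2 hg)).
have h1 : a_g g <= x0 by apply: (ge_inf (S_lb hg)).
have h2 : x0 <= b_g g by apply: (ub_le_sup (S_ub hg)).
apply: (lt_le_trans _ h2); rewrite lt_neqAle h1 andbT; apply/eqP => e.
by rewrite -e ga_eq ?eqxx in hx0.
Qed.

Lemma a_le0 (g : R -> R) (alpha : R) : inP g ->
  (forall x, a_g g < x < b_g g -> derivable g x 1) ->
  (forall x, a_g g < x < b_g g -> derive1 g x < alpha) ->
  alpha < 1 -> a_g g <= 0.
Proof.
move=> hg hd hlt a1; rewrite leNgt; apply/negP => a0.
have hab := ab_lt hg.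
have := hdec hg hd hlt (lexx _) (ltW hab) (lexx _).
rewrite ga_eq // gb_eq // !gtr0_norm //; last exact: lt_trans hab.
nra.
Qed.

Definition Tset (g : R -> R) (alpha c s : R) :=
  [set t | gr g (ptv (Dpt s) (c, alpha * c) t)].

Lemma Tset_pos g alpha c s t : 0 < c -> 0 <= alpha -> Tset g alpha c s t -> 0 <= t.
Proof.
move=> c0 al0; rewrite /Tset /gr /ptv /Dpt /= => [[_ [_ /andP[h4 _]]]].
move: h4; rewrite ler_norml => /andP[h4 _].
have e : t * (c * (1 + alpha)) = t * c + t * (alpha * c) by ring.
have : 0 <= t * (c * (1 + alpha)) by rewrite e; lra.
rewrite pmulr_lge0 //; apply: mulr_gt0 => //; lra.
Qed.

Lemma Tset_down g alpha c s : inP g ->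
  (forall x, a_g g < x < b_g g -> derivable g x 1) ->
  (forall x, a_g g < x < b_g g -> derive1 g x < alpha) ->
  0 <= alpha < 1 -> 0 < c ->
  forall t u, Tset g alpha c s t -> 0 <= u <= t -> Tset g alpha c s u.
Proof.
move=> hg hd hlt /andP[al0 al1] c0 t u ht /andP[u0 ut].
have t0 := Tset_pos c0 al0 ht.
move: ht; rewrite /Tset /gr /ptv /Dpt /= => [[/andP[h1 h2] [h3 /andP[h4 h5]]]].
move: h4; rewrite ler_norml => /andP[h4 h4'].
have tc0 : 0 <= t * c by apply: mulr_ge0 => //; lra.
have tac : t * (alpha * c) <= t * c by nra.
have s0 : s <= 0 by nra.
have a0 := a_le0 hg hd hlt al1.
have ga := ga_eq hg; rewrite ler0_norm // in ga.
have hs : a_g g <= s.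
  have := hdec hg hd hlt (lexx _) h1 h2; rewrite ga.
  nra.
have huc : u * c <= t * c by nra.
have xut : s + u * c <= s + t * c by lra.
have ac0 : 0 <= alpha * c by apply: mulr_ge0 => //; lra.
have uc0 : 0 <= u * c by apply: mulr_ge0 => //; lra.
have uac0 : 0 <= u * (alpha * c) by apply: mulr_ge0.
have uact : u * (alpha * c) <= t * (alpha * c) by apply: ler_wpM2r.
have uac : u * (alpha * c) <= u * c by nra.
have hx := hdec hg hd hlt _ xut h2.
split; first (apply/andP; split; nra).
split; first nra.
apply/andP; split; first (rewrite ler_norml; apply/andP; split; nra).
have : a_g g <= s + u * c by nra.
move/hx; nra.
Qed.


Lemma Tset_ub g alpha c s : 0 < c -> has_ubound (Tset g alpha c s).
Proof.
move=> c0; exists ((b_g g - s) / c) => t.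
rewrite /Tset /gr /ptv /Dpt /= => [[/andP[_ h2] _]].
rewrite ler_pdivlMr //; lra.
Qed.

Lemma Tset_closed g alpha c s : inP g -> closed (Tset g alpha c s).
Proof.
move=> hg.
have -> : Tset g alpha c s =
  [set t | a_g g <= s + t * c] `&` [set t | s + t * c <= b_g g] `&`
  [set t | 0 <= - s + t * (alpha * c)] `&`
  [set t | `|s + t * c| <= - s + t * (alpha * c)] `&`
  [set t | - s + t * (alpha * c) <= g (s + t * c)].
  apply/seteqP; split => t; rewrite /Tset /gr /ptv /Dpt /=.
    by move=> [/andP[-> ->] [-> /andP[-> ->]]].
  by move=> [[[[-> ->] ->] ->] ->].
have ca := @cont_aff s c.
have cb := @cont_aff (- s) (alpha * c).
repeat apply: closedI; apply: closed_leF => //; try exact: cst_continuous.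
  by apply: cont_comp => //; exact: norm_continuous.
by apply: cont_comp => //; exact: (proj1 hg).
Qed.

Lemma Tset_itv g alpha c s : inP g ->
  (forall x, a_g g < x < b_g g -> derivable g x 1) ->
  (forall x, a_g g < x < b_g g -> derive1 g x < alpha) ->
  0 <= alpha < 1 -> 0 < c -> Tset g alpha c s !=set0 ->
  Tset g alpha c s = [set` `[0, sup (Tset g alpha c s)]] /\ 0 <= sup (Tset g alpha c s).
Proof.
move=> hg hd hlt al c0 ne.
have ub := @Tset_ub g alpha c s c0.
have he : Tset g alpha c s (sup (Tset g alpha c s)).
  have := closure_sup ne ub.
  by rewrite -(proj1 (closure_id _) (@Tset_closed g alpha c s hg)).
have e0 : 0 <= sup (Tset g alpha c s) by apply: (Tset_pos c0 _ he); case/andP: al.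
split => //.
apply/seteqP; split => t /=; rewrite in_itv /=.
  have al0 : 0 <= alpha by case/andP: al.
  move=> ht; apply/andP; split; first exact: (Tset_pos c0 al0 ht).
  exact: (ub_le_sup ub).
move=> h; exact: (Tset_down hg hd hlt al c0 he h).
Qed.

Lemma len_itv (e : R) : 0 <= e -> fine (lebesgue_measure ([set` `[0, e]] : set R)) = e.
Proof.
move=> e0; rewrite lebesgue_measure_itv /=.
case: ifPn => [_|]; first by rewrite /= oppr0 addr0.
rewrite lte_fin -leNgt => h /=; apply/esym/le_anti; rewrite h e0 //.
Qed.


Lemma Kp_eq g alpha c s : inP g ->
  (forall x, a_g g < x < b_g g -> derivable g x 1) ->
  (forall x, a_g g < x < b_g g -> derive1 g x < alpha) ->
  0 <= alpha < 1 -> 0 < c -> v_alpha alpha = (c, alpha * c) ->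
  Kp alpha (gr g) (Dpt s) = ptv (Dpt s) (c, alpha * c) @` Tset g alpha c s.
Proof.
move=> hg hd hlt al c0 hv.
rewrite /Kp /line_len hv.
change [set t | gr g (ptv (Dpt s) (c, alpha * c) t)] with (Tset g alpha c s).
apply/seteqP; split => q.
  move=> [[t0 ht0] [t /andP[t0' tL] ->]].
  have [eqT e0] := Tset_itv hg hd hlt al c0 (ex_intro _ t0 ht0).
  move: eqT e0 tL; set e := sup _ => eqT e0.
  rewrite eqT len_itv // => tL.
  have hT : [set` `[0, e]] t by rewrite /= in_itv /= t0' tL.
  by exists t => //; rewrite eqT.
move=> [t ht <-].
have [eqT e0] := Tset_itv hg hd hlt al c0 (ex_intro _ t ht).
move: eqT e0; set e := sup _ => eqT e0.
split; first by exists t.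
exists t => //.
rewrite eqT len_itv //.
by move: ht; rewrite eqT /= in_itv.
Qed.

End L.
Unset Implicit Arguments. Set Strict Implicit.

Theorem lemma4p4 (R : realType) (g : R -> R) (alpha : R) :
  inP g ->
  (forall x, a_g g < x < b_g g -> derivable g x 1) ->
  {within [set x | a_g g < x < b_g g], continuous (derive1 g)} ->
  0 <= alpha < 1 ->
  (forall x, a_g g < x < b_g g -> derive1 g x < alpha) ->
  Sh alpha (gr g) = gr g.
Proof.
move=> hg hd _ al hlt.
have al0 : 0 <= alpha by case/andP: al.
set r := Num.sqrt (1 + alpha ^+ 2).
have r0 : 0 < r by rewrite sqrtr_gt0; apply: ltr_pwDl => //; exact: sqr_ge0.
set c := r^-1.
have c0 : 0 < c by rewrite invr_gt0.
have hv : v_alpha alpha = (c, alpha * c) by rewrite /v_alpha div1r.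
have key s := Kp_eq s hg hd hlt al c0 hv.
rewrite /Sh; apply/seteqP; split => q.
  by move=> [s _]; rewrite key => -[t ht <-].
move=> hq.
case: q hq => x y hq.
have k0 : 0 < c * (1 + alpha) by apply: mulr_gt0 => //; lra.
set t := (x + y) / (c * (1 + alpha)).
have ht : t * (c * (1 + alpha)) = x + y by rewrite divfK // gt_eqF.
exists (x - t * c) => //.
have hp : ptv (Dpt (x - t * c)) (c, alpha * c) t = (x, y).
  rewrite /ptv /Dpt /=; congr pair; first ring.
  have e : - (x - t * c) + t * (alpha * c) = t * (c * (1 + alpha)) - x by ring.
  rewrite e ht; ring.
rewrite key; exists t => //.
by rewrite /Tset /= hp.
Qed.
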